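(* Let $\theta:\mathbb{R}\to\mathbb{R}$ be continuously differentiable and strictly increasing, let $\tau,h_i,v^n>0$, set $\lambda=\tau v^n/h_i$, and write $\Theta_j^m=\theta(Q_j^m)$. Let $\bar w\in[0,1]$, $\Psi_{\mathrm{prev}}\in[0,2]$, $\tilde C>0$, and let $$\Psi(r)=\max\big\{0,\ \min\{(2\tilde C+\Psi_{\mathrm{prev}})\,r,\ 1-\bar w+\bar w r,\ 2\}\big\}.$$ Suppose real numbers $Q_i^n,Q_i^{n-1},Q_{i-1}^n,Q_{i-1}^{n+1}$ satisfy $$\Theta_i^n + \tfrac12\Psi(r_i^n)(\Theta_{i-1}^{n+1}-\Theta_i^n) + \lambda Q_i^n = \Theta_i^{n-1} + \tfrac12\Psi_{\mathrm{prev}}(\Theta_{i-1}^n-\Theta_i^{n-1}) + \lambda Q_{i-1}^n,\qquad r_i^n=\frac{\Theta_{i-1}^n-\Theta_i^{n-1}}{\Theta_{i-1}^{n+1}-\Theta_i^n},$$ (with the term $\Psi(r_i^n)(\Theta_{i-1}^{n+1}-\Theta_i^n)$ set to $0$ when $\Theta_{i-1}^{n+1}=\Theta_i^n$), and suppose $\tilde C\le C_i^n$, where $$C_i^n=\frac{Q_i^n-Q_{i-1}^n}{\Theta_i^n-\Theta_{i-1}^n}\,\lambda \ \text{ if } Q_i^n\ne Q_{i-1}^n,\qquad C_i^n=\frac{\lambda}{\theta'(Q_i^n)}\ \text{ if } Q_i^n=Q_{i-1}^n$$ (for instance $\tilde C=\lambda/M$ if $\theta'\le M$ on the relevant range). Then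 $$\min\{Q_i^{n-1},Q_{i-1}^n\}\le Q_i^n\le \max\{Q_i^{n-1},Q_{i-1}^n\}.$$
   Context: This is the high-resolution compact inverse scheme for the nonlinear advection equation with retardation $\partial_t\theta(q)+v(t)\partial_xq=0$ (e.g. $\theta(q)=\kappa q$ plus a nonlinear sorption term), in conservative form $h_i\Theta_i^{n+1/2}+\tau v^nQ_i^n=h_i\Theta_i^{n-1/2}+\tau v^nQ_{i-1}^n$ with $\Theta_i^{n+1/2}=\Theta_i^n+\frac12\Psi(r_i^n)(\Theta_{i-1}^{n+1}-\Theta_i^n)$; $C_i^n$ is the nonlinear local Courant number, $\Psi_{\mathrm{prev}}=\Psi(r_i^{n-1})$ the limiter value from the previous time level, $Q_i^n\approx q(x_i,t^n)$. *)

(* Defs.v *)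
From Stdlib Require Import Reals.
From Coquelicot Require Import Coquelicot.
Open Scope R_scope.

Definition Psi (Ctil Psi_prev wbar r : R) : R :=
  Rmax 0 (Rmin (Rmin ((2 * Ctil + Psi_prev) * r) (1 - wbar + wbar * r)) 2).

Definition lim_term (Ctil Psi_prev wbar num d : R) : R :=
  if Req_EM_T d 0 then 0 else Psi Ctil Psi_prev wbar (num / d) * d.

Definition courant (theta : R -> R) (lambda Qi Qim1 : R) : R :=
  if Req_EM_T Qi Qim1 then lambda / Derive theta Qi
  else (Qi - Qim1) / (theta Qi - theta Qim1) * lambda.

(* Main.v *)
Require Import Defs.
From Stdlib Require Import Reals Lra Psatz.
From Coquelicot Require Import Coquelicot.
Open Scope R_scope.

Lemma Psi_nonneg Ct Pp w r : 0 <= Psi Ct Pp w r.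
Proof. unfold Psi. apply Rmax_l. Qed.

Lemma Psi_le Ct Pp w r : Psi Ct Pp w r <= Rmax 0 ((2*Ct+Pp)*r).
Proof.
  unfold Psi. set (p := (2*Ct+Pp)*r). set (q := 1 - w + w*r).
  unfold Rmax, Rmin; repeat destruct Rle_dec; lra.
Qed.

Lemma lim_bound Ct Pp w a d (HC : 0 < Ct) (HP : 0 <= Pp) :
  let L := lim_term Ct Pp w a d in
  let k := 2*Ct+Pp in
  (0 < a -> 0 <= L <= k*a) /\ (a < 0 -> k*a <= L <= 0) /\ (a = 0 -> L = 0).
Proof.
  intros L k. unfold L, lim_term.
  destruct (Req_EM_T d 0) as [Hd|Hd].
  { assert (0 < k) by (unfold k; lra). split; [|split]; intros; nra. }
  pose proof (Psi_nonneg Ct Pp w (a/d)) as H0.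
  pose proof (Psi_le Ct Pp w (a/d)) as H1. fold k in H1.
  set (P := Psi Ct Pp w (a/d)) in *.
  assert (Hk : 0 < k) by (unfold k; lra).
  assert (Hkd : k * (a/d) * d = k * a) by (field; auto).
  destruct (Rlt_or_le 0 (a/d)) as [Hr|Hr].
  - assert (HP1 : P <= k*(a/d)).
    { unfold Rmax in H1; destruct Rle_dec; nra. }
    destruct (Rlt_or_le 0 d) as [Hd'|Hd'].
    + assert (0 < a).
      { assert (a = (a/d)*d) by (field; auto). nra. }
      split; [|split]; intros; try lra. split; nra.
    + assert (d < 0) by lra.
      assert (a < 0).
      { assert (a = (a/d)*d) by (field; auto). nra. }
      split; [|split]; intros; try lra. split; nra.
  - assert (HP0 : P = 0).
    { unfold Rmax in H1; destruct Rle_dec; nra. }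
    rewrite HP0. assert (0 < k) by lra.
    split; [|split]; intros; try lra.
    + (* a>0 means a/d<=0 so d<0 *)
      split; nra.
    + split; nra.
Qed.

(* Q_i^n = Qin, Q_i^{n-1} = Qinm1, Q_{i-1}^n = Qi1n, Q_{i-1}^{n+1} = Qi1np1 *)
Theorem mainTheorem6
  (theta : R -> R)
  (Htheta_diff : forall x, ex_derive theta x)
  (Htheta_C1 : forall x, continuous (Derive theta) x)
  (Htheta_incr : forall x y, x < y -> theta x < theta y)
  (tau h v : R) (Htau : 0 < tau) (Hh : 0 < h) (Hv : 0 < v)
  (wbar Psi_prev Ctil : R)
  (Hw : 0 <= wbar <= 1) (HP : 0 <= Psi_prev <= 2) (HC : 0 < Ctil)
  (Qin Qinm1 Qi1n Qi1np1 : R)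
  (Hscheme :
     let lambda := tau * v / h in
     theta Qin
     + / 2 * lim_term Ctil Psi_prev wbar
               (theta Qi1n - theta Qinm1) (theta Qi1np1 - theta Qin)
     + lambda * Qin
     = theta Qinm1 + / 2 * Psi_prev * (theta Qi1n - theta Qinm1)
       + lambda * Qi1n)
  (HCourant : Ctil <= courant theta (tau * v / h) Qin Qi1n) :
  Rmin Qinm1 Qi1n <= Qin <= Rmax Qinm1 Qi1n.
Proof.
  assert (Hmono : forall x y, theta x <= theta y -> x <= y).
  { intros x y H. destruct (Rle_or_lt x y) as [|Hl]; auto.
    apply Htheta_incr in Hl. lra. }
  unfold courant in HCourant.
  destruct (Req_EM_T Qin Qi1n) as [Heq|Hne].
  { subst. split; [apply Rmin_r|apply Rmax_r]. }
  simpl in Hscheme.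
  set (lambda := tau * v / h) in *.
  set (a := theta Qi1n - theta Qinm1) in *.
  set (e := theta Qin - theta Qi1n).
  assert (He : e <> 0).
  { unfold e. intro H0. destruct (Rlt_or_le Qin Qi1n) as [Hl|Hl].
    - apply Htheta_incr in Hl; lra.
    - assert (Qi1n < Qin) by lra. apply Htheta_incr in H; lra. }
  set (C := (Qin - Qi1n) / (theta Qin - theta Qi1n) * lambda) in *.
  assert (HlC : lambda * (Qin - Qi1n) = C * e).
  { unfold C, e. field. exact He. }
  destruct (lim_bound Ctil Psi_prev wbar a (theta Qi1np1 - theta Qin) HC (proj1 HP))
    as [Hpos [Hneg Hz]].
  set (L := lim_term Ctil Psi_prev wbar a (theta Qi1np1 - theta Qin)) in *.
  assert (Hmain : (1 + C) * e = -(1 - Psi_prev/2)*a - L/2).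
  { assert (HH: (1 + C) * e = e + lambda * (Qin - Qi1n)) by (rewrite HlC; ring).
    rewrite HH. unfold e, a in *. lra. }
  destruct (Rlt_or_le 0 a) as [Ha|Ha].
  - specialize (Hpos Ha).
    assert (e <= 0) by nra.
    assert (e + a >= 0) by nra.
    assert (Qin <= Qi1n) by (apply Hmono; unfold e in *; lra).
    assert (Qinm1 <= Qin) by (apply Hmono; unfold e, a in *; lra).
    assert (Qinm1 <= Qi1n) by lra.
    rewrite Rmin_left, Rmax_right; lra.
  - destruct (Rlt_or_le a 0) as [Ha'|Ha'].
    + specialize (Hneg Ha').
      assert (e >= 0) by nra.
      assert (e + a <= 0) by nra.
      assert (Qi1n <= Qin) by (apply Hmono; unfold e in *; lra).
      assert (Qin <= Qinm1) by (apply Hmono; unfold e, a in *; lra).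
      rewrite Rmin_right, Rmax_left; lra.
    + assert (a = 0) by lra. specialize (Hz H).
      assert (e = 0) by nra. contradiction.
Qed.
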